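(* Let $n\ge1$ players all have the same additive valuation $v$ on a finite set of goods $M$. Goods of value $0$ are allowed. Then there exists an allocation that is both EFX and Pareto optimal.
   Context: A valuation is a function $v:2^M\to\mathbb{R}_{\ge0}$ with $v(\emptyset)=0$ that is monotone: $v(S)\le v(T)$ whenever $S\subseteq T$. It is additive if $v(S)=\sum_{g\in S}v(\{g\})$ for all $S\subseteq M$. An allocation is an ordered partition $(A_1,\dots,A_n)$ of $M$; parts may be empty. It is EFX if for all players $i,j$ and every $g\in A_j$ we have $v_i(A_i)\ge v_i(A_j\setminus\{g\})$. It is Pareto optimal (PO) if there is no allocation $B$ with $v_i(B_i)\ge v_i(A_i)$ for all $i$ and $v_j(B_j)>v_j(A_j)$ for some $j$. *)

(* Defs.v *)
From HB Require Import structures.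
From mathcomp Require Import all_boot all_order all_algebra.
Set Implicit Arguments. Unset Strict Implicit. Unset Printing Implicit Defensive.
Import Order.TTheory GRing.Theory Num.Theory.
Local Open Scope ring_scope.

Definition valuation (R : realFieldType) (M : finType) (v : {set M} -> R) : Prop :=
  [/\ v set0 = 0, (forall S : {set M}, 0 <= v S) & (forall S T : {set M}, S \subset T -> v S <= v T)].

Definition additive_val (R : realFieldType) (M : finType) (v : {set M} -> R) : Prop :=
  forall S : {set M}, v S = \sum_(g in S) v [set g].

(* An allocation (ordered partition of M into n parts) is a map assigning
   each good to a player; bundle of player i: *)
Definition bundle (n : nat) (M : finType) (A : {ffun M -> 'I_n}) (i : 'I_n) : {set M} :=
  [set g | A g == i].

Definition EFX (R : realFieldType) (n : nat) (M : finType)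
    (vs : 'I_n -> {set M} -> R) (A : {ffun M -> 'I_n}) : Prop :=
  forall i j : 'I_n, forall g, g \in bundle A j ->
    vs i (bundle A j :\ g) <= vs i (bundle A i).

Definition pareto_optimal (R : realFieldType) (n : nat) (M : finType)
    (vs : 'I_n -> {set M} -> R) (A : {ffun M -> 'I_n}) : Prop :=
  ~ exists B : {ffun M -> 'I_n},
      (forall i, vs i (bundle A i) <= vs i (bundle B i)) /\
      (exists j, vs j (bundle A j) < vs j (bundle B j)).

(* Main.v *)
Require Import Defs.
From HB Require Import structures.
From mathcomp Require Import all_boot all_order all_algebra.
From mathcomp Require Import ring lra.
Import Order.TTheory GRing.Theory Num.Theory.
Local Open Scope ring_scope.

Section Aux.
Set Implicit Arguments.
Variables (R : realFieldType) (M : finType) (n : nat) (v : {set M} -> R).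
Hypothesis hadd : additive_val v.
Set Implicit Arguments.

Lemma vD1 (S : {set M}) g : g \in S -> v S = v [set g] + v (S :\ g).
Proof. by move=> gS; rewrite !hadd (big_setD1 g gS) /= big_set1. Qed.

Lemma sum_bundles (A : {ffun M -> 'I_n}) :
  \sum_k v (bundle A k) = v setT.
Proof.
rewrite hadd (partition_big A predT) //=; apply: eq_bigr => k _.
rewrite hadd; apply: eq_bigl => g; by rewrite /bundle in_setT inE.
Qed.

Definition move (A : {ffun M -> 'I_n}) g (i : 'I_n) : {ffun M -> 'I_n} :=
  [ffun x => if x == g then i else A x].

Lemma moveE (A : {ffun M -> 'I_n}) g i x : move A g i x = if x == g then i else A x.
Proof. by rewrite ffunE. Qed.

Lemma bundle_move_i (A : {ffun M -> 'I_n}) g i : A g != i ->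
  bundle (move A g i) i = g |: bundle A i.
Proof.
move=> _; apply/setP => x; rewrite /bundle !inE ffunE.
by case: (x =P g) => [->|]; rewrite ?eqxx.
Qed.

Lemma bundle_move_j (A : {ffun M -> 'I_n}) g i : A g != i ->
  bundle (move A g i) (A g) = bundle A (A g) :\ g.
Proof.
move=> ne; apply/setP => x; rewrite /bundle !inE ffunE.
case: (x =P g) => [->|]; first by rewrite eqxx /= eq_sym (negbTE ne).
by [].
Qed.

Lemma bundle_move_k (A : {ffun M -> 'I_n}) g i k : k != i -> k != A g ->
  bundle (move A g i) k = bundle A k.
Proof.
move=> ki kj; apply/setP => x; rewrite /bundle !inE ffunE.
case: (x =P g) => [->|//]; by rewrite eq_sym (negbTE ki) eq_sym (negbTE kj).
Qed.

Lemma sum2' (F : 'I_n -> R) i j : i != j ->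
  \sum_k F k - F i - F j = \sum_(k | (k != i) && (k != j)) F k.
Proof.
move=> ij; rewrite (bigD1 i) //= (bigD1 j) /=; last by rewrite eq_sym.
rewrite (eq_bigl (fun k => (k != i) && (k != j))); first by ring.
by move=> k; rewrite andbC.
Qed.

Lemma sum2 (F G : 'I_n -> R) i j : i != j ->
  (forall k, k != i -> k != j -> F k = G k) ->
  \sum_k F k - F i - F j = \sum_k G k - G i - G j.
Proof.
move=> ij H; rewrite !sum2' //; apply: eq_bigr => k /andP[ki kj]; exact: H.
Qed.

End Aux.

Theorem theorem5p3 (R : realFieldType) (M : finType) (n : nat) (hn : (0 < n)%N)
    (v : {set M} -> R) (hv : valuation v) (hadd : additive_val v) :
  exists A : {ffun M -> 'I_n},
    EFX (fun _ : 'I_n => v) A /\ pareto_optimal (fun _ : 'I_n => v) A.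
Proof.
case: hv => v0 vge0 vmono.
set A0 : {ffun M -> 'I_n} := [ffun _ => Ordinal hn].
pose Phi (A : {ffun M -> 'I_n}) := \sum_k (v (bundle A k)) ^+ 2.
pose Psi (A : {ffun M -> 'I_n}) := \sum_g v (bundle A (A g)).
have [A1 _ minA1] := arg_minP Phi (P := predT) (i0 := A0) isT.
have [A PA minA] := arg_minP Psi (P := fun A => Phi A == Phi A1) (i0 := A1) (eqxx _).
move/eqP: PA => PA.
exists A; split; last first.
  case=> B [H [j Hj]].
  have := sum_bundles hadd A; have := sum_bundles hadd B.
  rewrite (bigD1 j) //= [X in _ -> X = _ -> _](bigD1 j) //= => EB EA.
  have : \sum_(k | k != j) v (bundle A k) <= \sum_(k | k != j) v (bundle B k).
    by apply: ler_sum => k _; apply: H.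
  lra.
move=> i j g gj /=.
case: (eqVneq i j) => [->|ij]; first by apply: vmono; apply: subD1set.
have Agj : A g = j by move: gj; rewrite inE => /eqP.
rewrite leNgt; apply/negP => lt.
have ne : A g != i by rewrite Agj eq_sym.
set B := move A g i.
have gi : g \notin bundle A i by rewrite inE Agj eq_sym.
have EBi : v (bundle B i) = v [set g] + v (bundle A i).
  by rewrite bundle_move_i // (vD1 hadd (setU11 _ _)) setU1K.
have EBj : v (bundle B j) = v (bundle A j :\ g).
  by rewrite -Agj bundle_move_j.
have EAj := vD1 hadd gj.
have Ek : forall k, k != i -> k != j -> bundle B k = bundle A k.
  by move=> k ki kj; apply: bundle_move_k; rewrite ?Agj.
have gge0 := vge0 [set g].
have hPhi : Phi B - Phi A =
   (v (bundle B i))^+2 + (v (bundle B j))^+2 - (v (bundle A i))^+2 - (v (bundle A j))^+2.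
  have := @sum2 R n (fun k => (v (bundle A k))^+2) (fun k => (v (bundle B k))^+2) i j ij.
  rewrite -/(Phi A) -/(Phi B).
  have H2 : forall k, k != i -> k != j ->
    (v (bundle A k))^+2 = (v (bundle B k))^+2 by move=> k ki kj; rewrite Ek.
  move=> /(_ H2) Hs; lra.
case: (ltrgt0P (v [set g])) => [gpos|gneg|g0]; last 2 first.
- by move: gneg; rewrite ltNge gge0.
-
  have EBk : forall k, v (bundle B k) = v (bundle A k).
    move=> k; case: (eqVneq k i) => [->|ki]; first by rewrite EBi g0 add0r.
    case: (eqVneq k j) => [->|kj]; first by rewrite EBj EAj g0 add0r.
    by rewrite Ek.
  have PB : Phi B == Phi A1.
    by rewrite -PA /Phi; apply/eqP/eq_bigr => k _; rewrite EBk.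
  have EPB : Psi B = v (bundle A i) + \sum_(x | x != g) v (bundle A (A x)).
    rewrite /Psi (bigD1 g) //= moveE eqxx EBk; congr (_ + _).
    by apply: eq_bigr => x xg; rewrite moveE (negbTE xg) EBk.
  have EPA : Psi A = v (bundle A j) + \sum_(x | x != g) v (bundle A (A x)).
    by rewrite /Psi (bigD1 g) //= Agj.
  have := minA B PB.
  rewrite EPA EPB.
  move: EAj; rewrite g0 add0r => EAj'.
  lra.
- have := minA1 B isT; rewrite -PA.
  have : Phi B - Phi A < 0.
    rewrite hPhi EBi EBj EAj.
    set a := v (bundle A i) in lt *; set b := v (bundle A j :\ g) in lt *.
    set x := v [set g] in gpos *.
    nra.
  lra.
Qed.
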